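(* Let $n_p,n,N$ be positive integers and consider images with $n$ pixels from which $N$ square patches of $n_p$ pixels are extracted with unit stride and periodic boundary conditions (so every pixel belongs to exactly $n_p$ patches and $\sum_{i=1}^N\mathbf{P}_i^T\mathbf{P}_i=n_p\mathbf{I}$), where $\mathbf{P}_i\in\{0,1\}^{n_p\times n}$ is the binary matrix extracting the $i$-th patch. Let $\mathbf{C}_1,\dots,\mathbf{C}_K\in\mathbb{R}^{n_p\times n_p}$ be symmetric positive semi-definite matrices, let $\sigma^2>0$, and for each patch $i$ let $\beta_1^i,\dots,\beta_K^i\ge 0$ with $\sum_{j=1}^K\beta_j^i=1$. Define $$\mathbf{F}_i=\sum_{j=1}^K\beta_j^i\,\mathbf{C}_j(\mathbf{C}_j+\sigma^2\mathbf{I})^{-1},\qquad \mathbf{W}=\frac1{n_p}\sum_{i=1}^N\mathbf{P}_i^T\mathbf{F}_i\mathbf{P}_i.$$ Then $\mathbf{W}$ is symmetric, positive semi-definite, and its maximum eigenvalue is no larger than $1$.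
   Context: $\mathbf{W}$ is the linear map implemented by a patch-based Gaussian-mixture MMSE denoiser with fixed (pre-computed) posterior weights $\beta_j^i$: each noisy patch $\mathbf{P}_i\mathbf{y}$ is estimated as $\mathbf{F}_i\mathbf{P}_i\mathbf{y}$, and the patch estimates are put back in place and averaged. *)

(* Defs.v *)
From HB Require Import structures.
From mathcomp Require Import all_boot all_order all_algebra.
From mathcomp Require Import reals.
Set Implicit Arguments. Unset Strict Implicit. Unset Printing Implicit Defensive.
Import Order.TTheory GRing.Theory Num.Theory.
Local Open Scope ring_scope.

Definition symmetric_mx (R : realType) (m : nat) (A : 'M[R]_m) : Prop :=
  A^T = A.

Definition psd_mx (R : realType) (m : nat) (A : 'M[R]_m) : Prop :=
  symmetric_mx A /\ forall x : 'cV[R]_m, 0 <= (x^T *m A *m x) 0 0.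

Definition extraction_mx (R : realType) (np n : nat) (P : 'M[R]_(np, n)) : Prop :=
  (forall r c, P r c = 0 \/ P r c = 1) /\
  (forall r, exists! c, P r c = 1) /\
  (forall r1 r2 c, P r1 c = 1 -> P r2 c = 1 -> r1 = r2).

Definition Fmx (R : realType) (np K : nat) (C : 'I_K -> 'M[R]_np)
  (sigma2 : R) (beta : 'I_K -> R) : 'M[R]_np :=
  \sum_(j < K) beta j *: (C j *m invmx (C j + sigma2%:M)).

Definition Wmx (R : realType) (np n N K : nat) (P : 'I_N -> 'M[R]_(np, n))
  (C : 'I_K -> 'M[R]_np) (sigma2 : R) (beta : 'I_N -> 'I_K -> R) : 'M[R]_n :=
  (np%:R)^-1 *: \sum_(i < N) ((P i)^T *m Fmx C sigma2 (beta i) *m P i).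

(* Main.v *)
Require Import Defs.
From HB Require Import structures.
From mathcomp Require Import all_boot all_order all_algebra.
From mathcomp Require Import reals.
Import Order.TTheory GRing.Theory Num.Theory.
Local Open Scope ring_scope.

Section Aux.
Local Set Implicit Arguments.
Variable R : realType.

Definition qf (m : nat) (A : 'M[R]_m) (x : 'cV[R]_m) : R := (x^T *m A *m x) 0 0.
Arguments qf {m}.

Lemma qfD m (A B : 'M[R]_m) x : qf (A + B) x = qf A x + qf B x.
Proof. by rewrite /qf mulmxDr mulmxDl mxE. Qed.

Lemma qfZ m a (A : 'M[R]_m) x : qf (a *: A) x = a * qf A x.
Proof. by rewrite /qf -scalemxAr -scalemxAl mxE. Qed.

Lemma qf0 m (x : 'cV[R]_m) : qf 0 x = 0.
Proof. by rewrite /qf mulmx0 mul0mx mxE. Qed.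

Lemma qf_sum m I (r : seq I) (Pr : pred I) (F : I -> 'M[R]_m) x :
  qf (\sum_(i <- r | Pr i) F i) x = \sum_(i <- r | Pr i) qf (F i) x.
Proof.
apply: (big_morph (qf^~ x)); [by move=> A B; rewrite qfD | exact: qf0].
Qed.

Lemma qfP m k (P : 'M[R]_(k, m)) (A : 'M[R]_k) x :
  qf (P^T *m A *m P) x = qf A (P *m x).
Proof. by rewrite /qf trmx_mul !mulmxA. Qed.

Lemma qf1 m (x : 'cV[R]_m) : qf 1%:M x = \sum_i x i 0 ^+ 2.
Proof.
rewrite /qf mulmx1 mxE; apply: eq_bigr => i _; by rewrite mxE expr2.
Qed.

Lemma qf1_ge0 m (x : 'cV[R]_m) : 0 <= qf 1%:M x.
Proof. by rewrite qf1 sumr_ge0 // => i _; rewrite sqr_ge0. Qed.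

Lemma qf1_gt0 m (x : 'cV[R]_m) : x != 0 -> 0 < qf 1%:M x.
Proof.
move=> nz; rewrite lt_def qf1_ge0 andbT; apply/negP => /eqP h.
move: nz; rewrite qf1 in h; apply/negP; rewrite negbK; apply/eqP.
apply/matrixP => i j; rewrite ord1 mxE.
have := (psumr_eq0P (fun k _ => sqr_ge0 (x k 0)) h (i:=i) isT).
by move/eqP; rewrite sqrf_eq0 => /eqP.
Qed.

Lemma qfCC m (C : 'M[R]_m) y : C^T = C -> qf (C *m C) y = qf 1%:M (C *m y).
Proof.
move=> hC; rewrite /qf mulmx1 trmx_mul hC !mulmxA //.
Qed.

Lemma psd_unit m (C : 'M[R]_m) s : psd_mx C -> 0 < s -> C + s%:M \in unitmx.
Proof.
move=> [hs hp] s0; rewrite -row_free_unit -kermx_eq0.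
apply/negP => /negP hk.
set u := nz_row (kermx (C + s%:M)).
have unz : u != 0 by rewrite nz_row_eq0.
have : u *m (C + s%:M) = 0 by apply/sub_kermxP; exact: nz_row_sub.
move=> hu0.
have : qf (C + s%:M) u^T = 0 by rewrite /qf trmxK hu0 mul0mx mxE.
rewrite qfD -scalemx1 qfZ => /eqP.
have h1 := hp u^T.
have h2 : 0 < qf 1%:M u^T by apply: qf1_gt0; rewrite trmx_eq0.
have h3 : 0 < s * qf 1%:M u^T by rewrite mulr_gt0.
rewrite /qf in h1 h2 h3 *.
by rewrite gt_eqF // ltr_wpDl.
Qed.

Lemma key m (C : 'M[R]_m) s z : psd_mx C -> 0 < s ->
  0 <= qf (C *m invmx (C + s%:M)) z /\
  qf (C *m invmx (C + s%:M)) z <= qf 1%:M z.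
Proof.
move=> hC s0; have hu := @psd_unit m C s hC s0.
case: hC => hs hp.
set M := C + s%:M.
have hMT : M^T = M by rewrite /M linearD /= hs tr_scalar_mx.
set y := invmx M *m z.
have hz : z = M *m y by rewrite /y mulKVmx.
have eMC : M *m C = C *m C + s *: C.
  by rewrite /M mulmxDl mul_scalar_mx.
have eMM : M *m M = C *m C + s *: C + s *: C + (s * s) *: 1%:M.
  by rewrite {2}/M mulmxDr eMC mul_mx_scalar /M scalerDr !scale_scalar_mx mulr1 !addrA.
have e1 : qf (C *m invmx M) z = qf (C *m C) y + s * qf C y.
  by rewrite hz -qfP hMT !mulmxA mulmxKV // eMC qfD qfZ.
have e2 : qf 1%:M z = qf (C *m C) y + s * qf C y + s * qf C y + s * s * qf 1%:M y.
  by rewrite hz -qfP hMT mulmx1 eMM !qfD !qfZ.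
have a0 : 0 <= qf (C *m C) y by rewrite qfCC // qf1_ge0.
have b0 : 0 <= qf C y := hp y.
have c0 : 0 <= qf 1%:M y := qf1_ge0 y.
rewrite /M in e1 e2; rewrite e1 e2; split.
  by rewrite addr_ge0 // mulr_ge0 // ltW.
have h1 : 0 <= s * qf C y by rewrite mulr_ge0 // ltW.
have h2 : 0 <= s * s * qf 1%:M y by rewrite !mulr_ge0 // ltW.
by rewrite -addrA lerDl addr_ge0.
Qed.

Lemma sym_F m (C : 'M[R]_m) s : psd_mx C -> 0 < s ->
  (C *m invmx (C + s%:M))^T = C *m invmx (C + s%:M).
Proof.
move=> hC s0; have hu := @psd_unit m C s hC s0.
case: hC => hs _.
set M := C + s%:M.
have hMT : M^T = M by rewrite /M linearD /= hs tr_scalar_mx.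
have comm : M *m C = C *m M.
  by rewrite /M mulmxDl mulmxDr mul_scalar_mx mul_mx_scalar.
rewrite trmx_mul trmx_inv hMT hs.
apply: (canRL (mulmxK hu)).
rewrite -mulmxA -comm mulmxA mulVmx // mul1mx.
done.
Qed.

End Aux.
Arguments qf {R m}.

Theorem lemma2 (R : realType) (np n N K : nat)
  (Hnp : (0 < np)%N) (Hn : (0 < n)%N) (HN : (0 < N)%N)
  (P : 'I_N -> 'M[R]_(np, n))
  (HP : forall i, extraction_mx (P i))
  (Hcover : \sum_(i < N) ((P i)^T *m P i) = (np%:R) *: (1%:M : 'M[R]_n))
  (C : 'I_K -> 'M[R]_np) (HC : forall j, psd_mx (C j))
  (sigma2 : R) (Hsigma : 0 < sigma2)
  (beta : 'I_N -> 'I_K -> R)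
  (Hbeta0 : forall i j, 0 <= beta i j)
  (Hbeta1 : forall i, \sum_(j < K) beta i j = 1) :
  let W := Wmx P C sigma2 beta in
  symmetric_mx W /\ psd_mx W /\ (forall a : R, eigenvalue W a -> a <= 1).
Proof.
move=> W.
have symF : forall i, (Fmx C sigma2 (beta i))^T = Fmx C sigma2 (beta i).
  move=> i; rewrite /Fmx raddf_sum; apply: eq_bigr => j _.
  have trZ : forall a (A : 'M[R]_np), (a *: A)^T = a *: A^T.
    by move=> a A; apply/matrixP => k l; rewrite !mxE.
  by rewrite [LHS]/= trZ sym_F.
have symW : symmetric_mx W.
  rewrite /symmetric_mx /W /Wmx linearZ /= raddf_sum; congr (_ *: _).
  by apply: eq_bigr => i _; rewrite [LHS]/= !trmx_mul trmxK symF mulmxA.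
have hF : forall i z, 0 <= qf (Fmx C sigma2 (beta i)) z /\
                      qf (Fmx C sigma2 (beta i)) z <= qf 1%:M z.
  move=> i z; rewrite /Fmx qf_sum; split.
    by apply: sumr_ge0 => j _; rewrite qfZ mulr_ge0 // (proj1 (@key R np (C j) sigma2 z (HC j) Hsigma)).
  have -> : qf 1%:M z = (\sum_(j < K) beta i j) * qf 1%:M z by rewrite Hbeta1 mul1r.
  rewrite mulr_suml.
  apply: ler_sum => j _; rewrite qfZ ler_wpM2l //.
  exact: (proj2 (@key R np (C j) sigma2 z (HC j) Hsigma)).
have np0 : 0 < (np%:R : R) by rewrite ltr0n.
have qW : forall x, 0 <= qf W x /\ qf W x <= qf 1%:M x.
  move=> x; rewrite /W /Wmx qfZ qf_sum.
  have -> : qf 1%:M x = np%:R^-1 * \sum_(i < N) qf ((P i)^T *m 1%:M *m P i) x.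
    rewrite -qf_sum.
    under eq_bigr do rewrite mulmx1.
    by rewrite Hcover qfZ mulrA mulVf ?mul1r // gt_eqF.
  split.
    apply: mulr_ge0; first by rewrite invr_ge0 ltW.
    by apply: sumr_ge0 => i _; rewrite qfP (proj1 (hF i _)).
  apply: ler_wpM2l; first by rewrite invr_ge0 ltW.
  apply: ler_sum => i _.
  by rewrite !qfP (proj2 (hF i _)).
split => //; split.
  by split => // x; exact: (proj1 (qW x)).
move=> a /eigenvalueP [v hv vnz].
have := proj2 (qW v^T).
have -> : qf W v^T = a * qf 1%:M v^T.
  by rewrite /qf trmxK hv -scalemxAl mxE mulmx1.
have h : 0 < qf 1%:M v^T by apply: qf1_gt0; rewrite trmx_eq0.
by rewrite ger_pMl.
Qed.
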